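(* Let $G$ be a finite group and $N$ a normal subgroup of $G$ with $1\neq N\neq G$. If $\mathcal{D}(G)-\mathcal{D}_G(N)=m$, then $\mathcal{D}(G/N)\le m-1$. In particular, $\mathcal{D}(G/N)\le \mathcal{D}(G)-1$.
   Context: All groups are finite. $\mathcal{D}(G)$ denotes the number of conjugacy classes of nontrivial subgroups $H$ of $G$ with $N_G(H)\neq H$. For $N\trianglelefteq G$, $\mathcal{D}_G(N)$ denotes the number of $G$-conjugacy classes of nontrivial subgroups $H$ of $G$ with $N_G(H)\neq H$ that are properly contained in $N$. *)

(* Defs.v *)
From mathcomp Require Import all_boot all_fingroup.
Set Implicit Arguments. Unset Strict Implicit. Unset Printing Implicit Defensive.
Local Open Scope group_scope.

Definition nsn_subgroups (gT : finGroupType) (G : {group gT}) (P : pred {set gT})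
  : {set {set gT}} :=
  [set H : {set gT} | [&& group_set H, H \subset G, H != 1, 'N_G(H) != H & P H]].

Definition nclasses (gT : finGroupType) (G : {group gT}) (S : {set {set gT}}) : nat :=
  #|[set H :^: G | H in S]|.

Definition calD (gT : finGroupType) (G : {group gT}) : nat :=
  nclasses G (nsn_subgroups G predT).

Definition calDG (gT : finGroupType) (G N : {group gT}) : nat :=
  nclasses G (nsn_subgroups G (fun H => H \proper N)).

(* Main.v *)
Require Import Defs.
From mathcomp Require Import all_boot all_fingroup.
Set Implicit Arguments. Unset Strict Implicit. Unset Printing Implicit Defensive.
Local Open Scope group_scope.

Section Aux.
Variables (gT : finGroupType) (G N : {group gT}).
Hypothesis nNG : N <| G.

Lemma nG x : x \in G -> x \in 'N(N).
Proof. by move=> xG; have /andP[_ /subsetP] := nNG; apply. Qed.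

Lemma preJ (Kb : {set coset_of N}) x : x \in G ->
  coset N @*^-1 (Kb :^ coset N x) = coset N @*^-1 Kb :^ x.
Proof. by move=> xG; rewrite morphpreJ ?nG. Qed.

Lemma quoE : G / N = coset N @: G.
Proof. by rewrite /quotient morphimEsub //; case/andP: nNG. Qed.

Lemma pre_class (Kb : {set coset_of N}) :
  [set coset N @*^-1 X | X in Kb :^: (G / N)] = (coset N @*^-1 Kb) :^: G.
Proof.
rewrite /conjugates quoE -imset_comp -imset_comp.
by apply: eq_in_imset => x xG /=; rewrite preJ.
Qed.

Lemma properN_class (H : {set gT}) x : H \proper N -> x \in G -> H :^ x \proper N.
Proof.
move=> HN xG; have := nG xG => /normP <-.
by rewrite properJ.
Qed.

End Aux.

Theorem mainTheorem2 (gT : finGroupType) (G N : {group gT}) (m : nat) :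
  N <| G -> N :!=: 1 -> N :!=: G ->
  calD G = (calDG G N + m)%N ->
  (calD (G / N)%G + 1 <= m)%N /\ (calD (G / N)%G + 1 <= calD G)%N.
Proof.
move=> nNG ntN NneG.
rewrite /calD /calDG /nclasses.
set S := nsn_subgroups G predT.
set SN := nsn_subgroups G (fun H => H \proper N).
set Q := [set H :^: (G / N)%G | H in nsn_subgroups (G / N)%G predT].
set C := [set H :^: G | H in S].
set CN := [set H :^: G | H in SN].
have sCNC : CN \subset C.
  apply/subsetP=> _ /imsetP[H HS ->]; apply/imsetP; exists H => //.
  by move: HS; rewrite !inE => /and5P[-> -> -> -> _].
have cardC : #|C| = (#|CN| + #|C :\: CN|)%N.
  by rewrite -(cardsID CN C) (setIidPr sCNC).
suff key : (#|Q| + 1 <= #|C :\: CN|)%N.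
  rewrite cardC => /eqP; rewrite eqn_add2l => /eqP <-; split => //.
  exact: leq_trans key (leq_addl _ _).
have selfc (K : {set gT}) : K \in K :^: G.
  by apply/imsetP; exists 1; rewrite ?group1 ?conjsg1.
have notCN (K : {set gT}) : ~~ (K \proper N) -> K :^: G \notin CN.
  move=> KN; apply/imsetP => -[H]; rewrite !inE => /and5P[_ _ _ _ HN] eqK.
  move: (selfc K); rewrite eqK => /imsetP[x xG Kx].
  by move: KN; rewrite Kx (properN_class nNG).
have NS : (N : {set gT}) \in S.
  rewrite !inE groupP normal_sub // ntN /=.
  by rewrite (setIidPl (normal_norm nNG)) eq_sym andbT.
have NC : (N : {set gT}) :^: G \in C :\: CN.
  rewrite inE notCN ?proper_irrefl //=; apply/imsetP; by exists (N : {set gT}).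
pose f := fun X : {set {set coset_of N}} => [set coset N @*^-1 Kb | Kb in X].
pose g := fun Z : {set {set gT}} => [set coset N @* K | K in Z].
have fK : cancel f g.
  move=> X; rewrite /g /f -imset_comp.
  rewrite -[RHS]imset_id; apply: eq_imset => Kb /=.
  by rewrite morphpreK ?sub_im_coset.
have fQ : f @: Q \subset (C :\: CN) :\ ((N : {set gT}) :^: G).
  apply/subsetP => _ /imsetP[_ /imsetP[Kb KbS ->] ->].
  rewrite /f pre_class //.
  set K := coset N @*^-1 Kb.
  move: KbS; rewrite !inE => /and5P[gKb sKbG ntKb nKb _].
  have NK : N \subset K by have := ker_sub_pre (coset N) (Group gKb); rewrite ker_coset.
  have nprK : ~~ (K \proper N) by rewrite properE NK andbF.
  rewrite notCN //=; apply/andP; split.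
    apply/eqP => eqKN; move: (selfc K); rewrite eqKN => /imsetP[x xG].
    have := nG nNG xG => /normP -> KN.
    move/eqP: ntKb; apply; rewrite -(morphpreK (sub_im_coset Kb)) -/K KN.
    exact: trivg_quotient.
  apply/imsetP; exists K => //; rewrite !inE /= andbT (morphpre_groupset (coset N) (Group gKb)) /=.
  rewrite -(quotientGK nNG) morphpreS //=.
  have -> : K != 1.
    by apply: contraNneq ntN => K1; rewrite -subG1 -K1.
  rewrite /=; apply: contra nKb => /eqP nK.
  rewrite eqEsubset subsetI sKbG (normG (Group gKb)) !andbT.
  apply/subsetP => yb /setIP[ybG ybN].
  have ybG1 : yb \in G / N := ybG; move: ybG1 ybN; rewrite quoE // => /imsetP[y yG ->] ybN.
  have yK : y \in K.
    rewrite -nK; apply/setIP; split; first by rewrite quotientGK.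
    apply/normP.
    by rewrite /K -(preJ nNG) // (normP ybN).
  rewrite -(morphpreK (sub_im_coset Kb)) -/K.
  exact: mem_morphim (nG nNG yG) yK.
rewrite (cardsD1 ((N : {set gT}) :^: G) (C :\: CN)) NC addn1 add1n ltnS.
rewrite -(card_imset _ (can_inj fK)) /=.
exact: subset_leq_card.
Qed.
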